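(* The tree $\widehat T_n$ output by PruneTree equals the smallest tree contained in $E_n$ that contains every $w\in E_n$ with $\mathsf{CanRmv}(w)=0$.
   Context: $A$ is a finite alphabet; strings $w=w_{-j}\cdots w_{-1}$ over $A$; $e$ is the empty string; $w\preceq w'$ means $w$ is a suffix of $w'$; $\mathrm{par}(w_{-j}\cdots w_{-1})=w_{-j+1}\cdots w_{-1}$. A tree is a set of strings containing $e$ and closed under $\mathrm{par}$; a leaf is an element that is the parent of no element. Data: for $\ell=1,\dots,L$ a sample $X_1^n(\ell)\in A^n$; $N_{j,\ell}(w)$ is the number of occurrences of $w$ as a block of consecutive symbols in $X_1^j(\ell)$; $\hat p_{n,\ell}(a|w)=N_{n,\ell}(wa)/N_{n-1,\ell}(w)$ when $\min_\ell N_{n-1,\ell}(w)>0$. Metrics $d_\ell$ on distributions over $A$, $d(q,q')=(d_\ell(q_\ell,q'_\ell))_\ell$, $\hat p_n(\cdot|w)=(\hat p_{n,\ell}(\cdot|w))_\ell$; confidence radii $\mathrm{conf}(w)\in[0,1]^L$; $\|v\|_{L,q}=(\frac1L\sum_\ell|v_\ell|^q)^{1/q}$; fixed $k,r\ge1$ and $c>1$. $E_n=\{w:\min_\ell N_{n-1,\ell}(w)>0\}$. For nonempty $w\in E_n$, $\mathsf{CanRmv}(w)=1$ iff for all $w',w''\in E_n$ with $w\preceq w'$ and $\mathrm{par}(w)\preceq w''$: $\|d(\hat p_n(\cdot|w'),\hat p_n(\cdot|w''))\|_{L,k}\le c\|\mathrm{conf}(w')\|_{L,r}+c\|\mathrm{conf}(w'')\|_{L,r}$;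 otherwise $0$. PruneTree: start with $\widehat T_n=E_n$ and all nodes unexamined; while $\widehat T_n$ has an unexamined leaf $w$ ($w\neq e$), remove $w$ from $\widehat T_n$ if $\mathsf{CanRmv}(w)=1$, and mark $w$ examined; output $\widehat T_n$. *)

(* Defs.v *)
From HB Require Import structures.
From mathcomp Require Import all_boot all_order all_algebra.
From mathcomp Require Import all_classical all_reals all_analysis.
Set Implicit Arguments. Unset Strict Implicit. Unset Printing Implicit Defensive.
Import Order.TTheory GRing.Theory Num.Theory.
Local Open Scope ring_scope.

(* Strings w = w_{-j} ... w_{-1} are represented by the sequence
   [:: w_{-j}; ...; w_{-1}] (oldest symbol first).  The empty string e is [::]. *)

Section Defs.
Variable A : finType.

Definition par (w : seq A) : seq A := behead w.

Definition suffix_of (w w' : seq A) : bool := suffix w w'.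

(* Number of occurrences of w as a block of consecutive symbols in x
   (positions i = 0 .. |x| - |w|; the empty string occurs |x|+1 times). *)
Definition occ (x w : seq A) : nat :=
  if (size w <= size x)%N then
    count (fun i => take (size w) (drop i x) == w) (iota 0 (size x - size w).+1)
  else 0.

Definition strset := seq A -> Prop.

Definition subset_s (S T : strset) : Prop := forall w, S w -> T w.

Definition is_tree (T : strset) : Prop :=
  T [::] /\ forall w, T w -> T (par w).

Definition is_leaf (T : strset) (w : seq A) : Prop :=
  T w /\ forall u, T u -> u <> [::] -> par u <> w.

Definition smallest_tree_containing (E S T : strset) : Prop :=
  [/\ is_tree T, subset_s T E, subset_s S T &
      forall T', is_tree T' -> subset_s T' E -> subset_s S T' -> subset_s T T'].

(* PruneTree as a (nondeterministic) transition system on states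
   (current tree, set of examined nodes), given the predicate CanRmv. *)
Definition pstate := (strset * strset)%type.

Definition prune_step (canrmv : seq A -> Prop) (s s' : pstate) : Prop :=
  exists w, [/\ is_leaf s.1 w, w <> [::], ~ s.2 w,
     (forall u, s'.1 u <-> (s.1 u /\ ~ (u = w /\ canrmv w))) &
     (forall u, s'.2 u <-> (s.2 u \/ u = w))].

Inductive prune_run (canrmv : seq A -> Prop) : pstate -> pstate -> Prop :=
| prune_refl s : prune_run canrmv s s
| prune_next s s' s'' : prune_step canrmv s s' -> prune_run canrmv s' s'' ->
    prune_run canrmv s s''.

Definition prune_terminal (s : pstate) : Prop :=
  ~ exists w, [/\ is_leaf s.1 w, w <> [::] & ~ s.2 w].

End Defs.

Section Stats.
Variables (R : realType) (A : finType) (L n : nat).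
Variable X : 'I_L -> seq A.

Definition Ncount (j : nat) (l : 'I_L) (w : seq A) : nat := occ (take j (X l)) w.

Definition En : strset A := fun w => forall l : 'I_L, (0 < Ncount n.-1 l w)%N.

Definition phat (l : 'I_L) (w : seq A) : A -> R :=
  fun a => (Ncount n l (rcons w a))%:R / (Ncount n.-1 l w)%:R.

Definition normLq (q : R) (v : 'I_L -> R) : R :=
  powR ((L%:R)^-1 * \sum_(l < L) powR `|v l| q) q^-1.

Variables (d : 'I_L -> (A -> R) -> (A -> R) -> R) (conf : seq A -> 'I_L -> R)
  (k r c : R).

Definition canrmv (w : seq A) : Prop :=
  forall w' w'', En w' -> En w'' -> suffix_of w w' -> suffix_of (par w) w'' ->
    normLq k (fun l => d l (phat l w') (phat l w''))
      <= c * normLq r (conf w') + c * normLq r (conf w'').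

Definition not_removable : strset A :=
  fun w => [/\ En w, w <> [::] & ~ canrmv w].

End Stats.

Definition is_distr (R : realType) (A : finType) (q : A -> R) : Prop :=
  (forall a, 0 <= q a) /\ \sum_(a : A) q a = 1.

Definition metric_on_distr (R : realType) (A : finType)
  (m : (A -> R) -> (A -> R) -> R) : Prop :=
  forall q1 q2 q3, is_distr q1 -> is_distr q2 -> is_distr q3 ->
    [/\ 0 <= m q1 q2, (m q1 q2 = 0 <-> q1 = q2), m q1 q2 = m q2 q1 &
        m q1 q3 <= m q1 q2 + m q2 q3].

(* Main.v *)
Require Import Defs.
From HB Require Import structures.
From mathcomp Require Import all_boot all_order all_algebra.
From mathcomp Require Import all_classical all_reals all_analysis.
From Stdlib Require Import Classical.
From mathcomp Require Import zify.
Import Order.TTheory GRing.Theory Num.Theory.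
Local Open Scope ring_scope.

Section Gen.
Variable A : finType.

Lemma tree_suffix (T : strset A) u w : is_tree T -> T u -> suffix w u -> T w.
Proof.
move=> [_ Hp] Tu /suffixP [s es]; move: Tu; rewrite es; clear es.
elim: s => [//|a s IH] /= H; apply: IH; exact: (Hp _ H).
Qed.

Lemma occ_pos (x w : seq A) : (0 < occ x w)%N -> exists s1 s2, x = s1 ++ w ++ s2.
Proof.
rewrite /occ; case: ifP => hs; last by [].
rewrite -has_count => /hasP [i]; rewrite mem_iota add0n ltnS => hi /eqP ht.
exists (take i x), (drop (size w) (drop i x)).
set s2 := drop (size w) (drop i x).
by rewrite -{1}ht /s2 !cat_take_drop.
Qed.

Lemma occ_pos2 (x w s1 s2 : seq A) : x = s1 ++ w ++ s2 -> (0 < occ x w)%N.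
Proof.
move=> ->; rewrite /occ !size_cat.
have -> : (size w <= size s1 + (size w + size s2))%N by rewrite addnCA leq_addr.
rewrite -has_count; apply/hasP; exists (size s1).
  rewrite mem_iota add0n; apply/andP; split => //; lia.
by rewrite drop_size_cat // take_size_cat.
Qed.

Definition Inv (E : strset A) (C : seq A -> Prop) (s : pstate A) : Prop :=
  [/\ is_tree s.1, subset_s s.1 E,
      subset_s (fun w => [/\ E w, w <> [::] & ~ C w]) s.1 &
      forall w, s.2 w -> s.1 w -> ~ C w].

Lemma inv_step E C s s' : Inv E C s -> prune_step C s s' -> Inv E C s'.
Proof.
move=> [[T0 Tp] sub NR ex] [w [[Tw lf] wne nex H1 H2]].
split.
- split.
  + apply/H1; split=> // [[e _]]; exact: wne (esym e).
  + move=> u /H1 [Tu nu]; apply/H1; split; first exact: Tp.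
    move=> [e cw]; case: (u =P [::]) => [eu|une].
    * by rewrite eu in e; apply: wne; rewrite -e.
    * exact: (lf u Tu une e).
- by move=> u /H1 [] /sub.
- move=> u hu; apply/H1; split; first exact: NR.
  by case: hu => _ _ nc [e cw]; apply: nc; rewrite e.
- move=> u /H2 [eu|->] /H1 [Tu nu]; first exact: ex.
  by move=> cw; apply: nu.
Qed.

Lemma inv_run E C s s' : Inv E C s -> prune_run C s s' -> Inv E C s'.
Proof.
move=> I R; elim: R I => // s0 s1 s2 st _ IH I; apply: IH; exact: (@inv_step E C _ _ I st).
Qed.

Lemma gen_main (E : strset A) (C : seq A -> Prop) (N : nat) (final : pstate A) :
  is_tree E -> (forall w, E w -> (size w <= N)%N) ->
  prune_run C (E, fun _ => False) final -> prune_terminal final ->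
  smallest_tree_containing E (fun w => [/\ E w, w <> [::] & ~ C w]) final.1.
Proof.
move=> TE bnd R term.
have I0 : Inv E C (E, fun _ => False) by split => //= w [].
have [Tf sub NR ex] := @inv_run E C _ _ I0 R.
split => // T' TT' _ NRT' w Tw.
case: (w =P [::]) => [->|wne]; first by case: TT'.
suff [v [NRv sv]] : exists v, [/\ E v, v <> [::] & ~ C v] /\ suffix w v.
  exact: (@tree_suffix T' v w TT' (NRT' _ NRv) sv).
have key : forall m u, final.1 u -> u <> [::] -> (N - size u <= m)%N ->
    exists v, [/\ E v, v <> [::] & ~ C v] /\ suffix u v.
  elim=> [|m IH] u Tu une hm.
  - case: (classic (is_leaf final.1 u)) => lf.
      have eu : final.2 u by apply: NNPP => nu; apply: term; exists u.
      exists u; split; last exact: suffix_refl.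
      split => //; [exact: sub | exact: ex].
    exfalso; apply: lf; split => // v Tv vne pv.
    have := bnd _ (sub _ Tv); case: v Tv vne pv => // a v' _ _ /= pv.
    rewrite pv /= => hs; have := bnd _ (sub _ Tu).
    lia.
  - case: (classic (is_leaf final.1 u)) => lf.
      have eu : final.2 u by apply: NNPP => nu; apply: term; exists u.
      exists u; split; last exact: suffix_refl.
      split => //; [exact: sub | exact: ex].
    have [v [Tv vne pv]] : exists v, [/\ final.1 v, v <> [::] & par v = u].
      apply: NNPP => hn; apply: lf; split => // v Tv vne pv; apply: hn; by exists v.
    case: v Tv vne pv => // a v' Tv _ /= pv; subst v'.
    have [z [NRz sz]] := IH (a :: u) Tv (fun h => ltac:(discriminate)) ltac:(
      have := bnd _ (sub _ Tv); simpl; lia).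
    exists z; split => //; exact: suffix_trans (suffix_cons u a) sz.
exact: (key (N - size w)%N w Tw wne (leqnn _)).
Qed.

End Gen.

Lemma En_tree (A : finType) (L n : nat) (X : 'I_L -> seq A) : is_tree (En n X).
Proof.
split.
  + move=> l; rewrite /Ncount; apply: (@occ_pos2 A _ _ [::] (take n.-1 (X l))); by rewrite cat0s.
  + move=> w Ew l; have [s1 [s2 e]] := @occ_pos A _ _ (Ew l).
    case: w Ew e => [|a w] Ew e; first exact: Ew.
    change (0 < Ncount X n.-1 l w)%N.
    rewrite /Ncount; apply: (@occ_pos2 A _ _ (rcons s1 a) s2).
    by rewrite e cat_rcons.
Qed.

Lemma En_bound (A : finType) (L n : nat) (X : 'I_L -> seq A) :
  (0 < L)%N -> (forall l, size (X l) = n) -> forall w, En n X w -> (size w <= n)%N.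
Proof.
move=> L0 sX w Ew; have [s1 [s2 e]] := @occ_pos A _ _ (Ew (Ordinal L0)).
  have h := congr1 size e; rewrite !size_cat in h.
  have h2 : (size (take n.-1 (X (Ordinal L0))) <= n)%N.
    by rewrite -(sX (Ordinal L0)) size_take_min geq_minr.
  rewrite /Ncount h in h2.
  by apply: leq_trans h2; rewrite addnCA leq_addr.
Qed.

Theorem propositionA1 (R : realType) (A : finType) (L n : nat)
  (X : 'I_L -> seq A)
  (d : 'I_L -> (A -> R) -> (A -> R) -> R) (conf : seq A -> 'I_L -> R)
  (k r c : R) :
  (0 < L)%N ->
  (forall l, size (X l) = n) ->
  (forall l, metric_on_distr (d l)) ->
  (forall w l, 0 <= conf w l <= 1) ->
  1 <= k -> 1 <= r -> 1 < c ->
  forall final : pstate A,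
    prune_run (canrmv n X d conf k r c) (En n X, fun _ => False) final ->
    prune_terminal final ->
    smallest_tree_containing (En n X) (not_removable n X d conf k r c) final.1.
Proof.
move=> L0 sX _ _ _ _ _ final Rn term.
exact: (@gen_main A (En n X) _ n final (@En_tree A L n X) (@En_bound A L n X L0 sX) Rn term).
Qed.
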